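(* If $k$ is odd and $U$ is a $k$-unitrade, then $|U|$ is even.
   Context: A $k$-unitrade on a finite set $V$ is a set $U$ of $k$-element subsets (blocks) of $V$ such that every $(k-1)$-element subset of $V$ is contained in an even number of blocks of $U$. *)

(* Defs.v *)
From mathcomp Require Import all_boot.
Set Implicit Arguments. Unset Strict Implicit. Unset Printing Implicit Defensive.

Definition unitrade (V : finType) (k : nat) (U : {set {set V}}) : Prop :=
  (forall B, B \in U -> #|B| = k) /\
  (forall S : {set V}, #|S| = k.-1 ->
     ~~ odd #|[set B in U | S \subset B]|).

(* Main.v *)
Require Import Defs.
From mathcomp Require Import all_boot.

Lemma count_sub (V : finType) (B : {set V}) : 0 < #|B| ->
  #|[set S : {set V} | S \subset B & #|S| == #|B|.-1]| = #|B|.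
Proof.
move=> Bpos.
have -> : [set S : {set V} | S \subset B & #|S| == #|B|.-1] = [set B :\ x | x in B].
  apply/setP => S; rewrite inE; apply/andP/imsetP.
  - case=> sSB /eqP cS.
    have : #|B :\: S| == 1.
      rewrite cardsD (setIidPr sSB) cS; move: Bpos; case: #|B| => // n _; by rewrite /= subSnn.
    case/cards1P => x Ex.
    have xB : x \in B by have := set11 x; rewrite -Ex => /setDP [].
    exists x => //; rewrite -Ex setDDr setDv set0U.
    by rewrite (setIidPr sSB).
  - case=> x xB ->; split; first exact: subD1set.
    by rewrite (cardsD1 x B) xB.
rewrite card_in_imset //.
move=> x y xB yB E; apply/eqP; apply/negPn/negP => nxy.
have : x \in B :\ y by rewrite !inE nxy.
by rewrite -E !inE eqxx.
Qed.

Theorem proposition11 (V : finType) (k : nat) (U : {set {set V}}) :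
  odd k -> unitrade k U -> ~~ odd #|U|.
Proof.
move=> ok [cU eU].
have E : \sum_(S : {set V} | #|S| == k.-1) #|[set B in U | S \subset B]|
       = \sum_(B in U) #|[set S : {set V} | S \subset B & #|S| == k.-1]|.
  under eq_bigr => S _ do rewrite -sum1_card.
  under [X in X = _]eq_bigr => S _ do rewrite -sum1_card.
  rewrite (exchange_big_dep (fun B : {set V} => B \in U)) /=; last by move=> S B _; rewrite inE => /andP[] ->.
  apply: eq_bigr => B BU; apply: eq_bigl => S; rewrite !inE BU /=.
  by rewrite andbC.
have : ~~ odd (\sum_(S : {set V} | #|S| == k.-1) #|[set B in U | S \subset B]|).
  elim/big_ind: _ => //; first by move=> a b /negbTE ha /negbTE hb; rewrite oddD ha hb.
  by move=> S /eqP; apply: eU.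
rewrite E.
rewrite (eq_bigr (fun _ => k)); last first.
  move=> B BU; rewrite -(cU B BU) count_sub // (cU B BU); by move: ok; clear; case: k.
rewrite sum_nat_const oddM ok andbT.
by [].
Qed.
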